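(* Let $N,M\ge 1$, let $(a_\ell[i])_{i=0}^{N-1}$, $(b_\ell[i])_{i=0}^{N-1}$ for $\ell=1,\dots,M$, and $(c[i])_{i=0}^{N-1}$ be sequences of nonnegative integers, and let $W$ be the maximum of all their entries. Build an undirected graph consisting of three paths $u_0-u_1-\cdots-u_{N-1}$, $v_0-v_1-\cdots-v_{N-1}$, $w_0-w_1-\cdots-w_{N-1}$ whose edges all have weight $0$, plus nodes $x_1,\dots,x_M$, and the following additional edges: for every $i\in\{0,\dots,N-1\}$ and $\ell\in\{1,\dots,M\}$, an edge $\{u_i,x_\ell\}$ of weight $5W-a_\ell[i]$; for every $j\in\{0,\dots,N-1\}$ and $\ell$, an edge $\{x_\ell,v_j\}$ of weight $5W-b_\ell[j]$; and for every $k\in\{0,\dots,N-1\}$, an edge $\{v_0,w_k\}$ of weight $5W+c[k]$. Then the minimum total weight of a $u_0$-$w_{N-1}$ path in this graph using at most $N+2$ edges is strictly less than $15W$ if and only if there exist $i,j,k\in\{0,\dots,N-1\}$ and $\ell\in\{1,\dots,M\}$ with $i+j\le k$ and $c[k]<a_\ell[i]+b_\ell[j]$.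
   Context: The weight of a path is the sum of its edge weights; the number of edges it uses is its number of hops. *)

(* Defs.v *)
From mathcomp Require Import all_boot.
Set Implicit Arguments. Unset Strict Implicit. Unset Printing Implicit Defensive.

(* Vertices: u_i, v_j, w_k (i,j,k : 'I_N) and x_l (l : 'I_M, standing for x_{l+1}). *)
Definition vtx (N M : nat) : finType := (('I_N + 'I_N) + 'I_N + 'I_M)%type.

Section Graph.
Variables (N M : nat).
Variables (a b : 'I_M -> 'I_N -> nat) (c : 'I_N -> nat).

Definition uV (i : 'I_N) : vtx N M := inl (inl (inl i)).
Definition vV (j : 'I_N) : vtx N M := inl (inl (inr j)).
Definition wV (k : 'I_N) : vtx N M := inl (inr k).
Definition xV (l : 'I_M) : vtx N M := inr l.

Definition Wmax : nat :=
  maxn (\max_(l : 'I_M) \max_(i : 'I_N) maxn (a l i) (b l i)) (\max_(k : 'I_N) c k).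

(* one orientation of every edge, with its weight *)
Definition dedge (x y : vtx N M) : option nat :=
  match x, y with
  | inl (inl (inl i)), inl (inl (inl i')) => if i'.+1 == i :> nat then Some 0 else None
  | inl (inl (inr j)), inl (inl (inr j')) => if j'.+1 == j :> nat then Some 0 else None
  | inl (inr k), inl (inr k') => if k'.+1 == k :> nat then Some 0 else None
  | inl (inl (inl i)), inr l => Some (5 * Wmax - a l i)
  | inr l, inl (inl (inr j)) => Some (5 * Wmax - b l j)
  | inl (inl (inr j)), inl (inr k) => if j == 0 :> nat then Some (5 * Wmax + c k) else None
  | _, _ => None
  end.

Definition edge (x y : vtx N M) : option nat :=
  match dedge x y with Some w => Some w | None => dedge y x end.

Fixpoint walk_weight (x : vtx N M) (p : seq (vtx N M)) : option nat :=
  match p with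
  | [::] => Some 0
  | y :: q => match edge x y, walk_weight y q with
              | Some e, Some r => Some (e + r)
              | _, _ => None
              end
  end.

Definition hop_path (s t : vtx N M) (h : nat) (p : seq (vtx N M)) (d : nat) : Prop :=
  [/\ uniq (s :: p), last s p = t, size p <= h & walk_weight s p = Some d].

Definition is_min_hop_dist (s t : vtx N M) (h d : nat) : Prop :=
  (exists p, hop_path s t h p d) /\ (forall p d', hop_path s t h p d' -> d <= d').

End Graph.

(* Main.v *)
Require Import Defs.
From Stdlib Require Import Classical.
From mathcomp Require Import all_boot zify.
Set Implicit Arguments. Unset Strict Implicit. Unset Printing Implicit Defensive.

Lemma Wbounds N M (a b : 'I_M -> 'I_N -> nat) c :
  (forall l i, a l i <= Wmax a b c) /\ (forall l i, b l i <= Wmax a b c) /\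
  (forall k, c k <= Wmax a b c).
Proof.
rewrite /Wmax; split; [|split].
- move=> l i; apply: leq_trans (leq_maxl _ _).
  apply: leq_trans (@leq_bigmax _ (fun l => \max_(i : 'I_N) maxn (a l i) (b l i)) l).
  apply: leq_trans (@leq_bigmax _ (fun i => maxn (a l i) (b l i)) i); exact: leq_maxl.
- move=> l i; apply: leq_trans (leq_maxl _ _).
  apply: leq_trans (@leq_bigmax _ (fun l => \max_(i : 'I_N) maxn (a l i) (b l i)) l).
  apply: leq_trans (@leq_bigmax _ (fun i => maxn (a l i) (b l i)) i); exact: leq_maxr.
- move=> k; apply: leq_trans (leq_maxr _ _); exact: (@leq_bigmax _ c k).
Qed.

Definition Q N M (a b : 'I_M -> 'I_N -> nat) c (y : vtx N M) (n r : nat) : Prop :=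
  let W := Wmax a b c in
  match y with
  | inl (inl (inl i)) => (exists (i' j k : 'I_N) (l : 'I_M), i' + j + N + 2 <= n + i + k /\
        (5 * W - a l i') + (5 * W - b l j) + (5 * W + c k) <= r) \/ 15 * W <= r
  | inl (inl (inr j)) => (exists k : 'I_N, j + N <= n + k /\ 5 * W + c k <= r) \/ 13 * W <= r
  | inl (inr k) => N.-1 <= n + k \/ 10 * W <= r
  | inr l => (exists (j k : 'I_N), j + N + 1 <= n + k /\
        (5 * W - b l j) + (5 * W + c k) <= r) \/ 17 * W <= r
  end.

Lemma walkQ N M (a b : 'I_M -> 'I_N -> nat) c (t : 'I_N) (Ht : t = N.-1 :> nat) :
  forall p y r, last y p = wV M t -> walk_weight a b c y p = Some r ->
  Q a b c y (size p) r.
Proof.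
have [Ha [Hb Hc]] := Wbounds a b c.
set W := Wmax a b c in Ha Hb Hc *.
elim=> [|z p IH] y r /=.
  by move=> -> [<-]; left; rewrite Ht; lia.
case Hyz: (edge a b c y z) => [e|] //.
case Hw: (walk_weight a b c z p) => [r'|] // Hl [<-].
have HQ := IH z r' Hl Hw.
clear Hl Hw IH; move: HQ Hyz; rewrite /edge /Q -/W.
case: y => [[[i|j]|k]|l]; case: z => [[[i'|j']|k']|l'] /= HQ;
  try discriminate.
all: rewrite -/W.
- case: eqP => E1; [case=> <-|case: eqP => E2 // [<-]].
  + case: HQ => [[i0 [j [k [l [H1 H2]]]]]|H]; [left; exists i0, j, k, l|right]; lia.
  + case: HQ => [[i0 [j [k [l [H1 H2]]]]]|H]; [left; exists i0, j, k, l|right]; lia.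
- case=> <-; case: HQ => [[j [k [H1 H2]]]|H]; [left; exists i, j, k, l'|right].
  + lia.
  + have := Ha l' i; lia.
- case: eqP => E1; [case=> <-|case: eqP => E2 // [<-]].
  + case: HQ => [[k [H1 H2]]|H]; [left; exists k|right]; lia.
  + case: HQ => [[k [H1 H2]]|H]; [left; exists k|right]; lia.
- case: eqP => E // [<-]; case: HQ => [H|H]; [left; exists k'|right]; lia.
- case=> <-; have := Hb l' j; case: HQ => [[j0 [k [H1 H2]]]|H]; right.
  + have := Hb l' j0; lia.
  + lia.
- case: eqP => E // [<-]; case: HQ => [[k0 [H1 H2]]|H]; right; lia.
- case: eqP => E1; [case=> <-|case: eqP => E2 // [<-]]; case: HQ => H; [left|right|left|right]; lia.
- case=> <-; have := Ha l i'; case: HQ => [[i0 [j [k [l0 [H1 H2]]]]]|H]; right.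
  + have := Ha l0 i0; have := Hb l0 j; lia.
  + lia.
- case=> <-; case: HQ => [[k [H1 H2]]|H]; [left; exists j', k|right].
  + lia.
  + have := Hb l j'; lia.
Qed.
Set Implicit Arguments. Unset Strict Implicit. Unset Printing Implicit Defensive.

Lemma min_exists (P : nat -> Prop) n : P n -> exists d, P d /\ forall d', P d' -> d <= d'.
Proof.
elim/ltn_ind: n => n IH Pn.
case: (classic (exists m, m < n /\ P m)) => [[m [lt Pm]]|H].
  exact: IH m lt Pm.
exists n; split=> // d' Pd'; rewrite leqNgt; apply/negP => lt; apply: H; by exists d'.
Qed.

Definition ordN N (HN : 0 < N) (m : nat) : 'I_N := insubd (Ordinal HN) m.
Arguments ordN : simpl never.
Lemma val_ordN N (HN : 0 < N) m : m < N -> ordN HN m = m :> nat.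
Proof. by move=> h; rewrite /ordN val_insubd h. Qed.
Lemma ordN_ord N (HN : 0 < N) (i : 'I_N) : ordN HN i = i.
Proof. by apply: val_inj; rewrite /= val_ordN. Qed.

Fixpoint down (n : nat) : seq nat := if n is n'.+1 then n' :: down n' else [::].
Lemma mem_down n x : (x \in down n) = (x < n).
Proof. elim: n => //= n IH; by rewrite in_cons IH ltnS (leq_eqVlt x). Qed.
Lemma uniq_down n : uniq (down n).
Proof. elim: n => //= n ->; by rewrite mem_down ltnn. Qed.
Lemma size_down n : size (down n) = n.
Proof. by elim: n => //= n ->. Qed.

Lemma walk_cat N M (a b : 'I_M -> 'I_N -> nat) c x p q :
  walk_weight a b c x (p ++ q) =
  match walk_weight a b c x p, walk_weight a b c (last x p) q with
  | Some r1, Some r2 => Some (r1 + r2) | _, _ => None end.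
Proof.
elim: p x => [|y p IH] x /=.
  by case: walk_weight.
rewrite IH; case: edge => [e|]; case: (walk_weight a b c y p) => [r|] //;
  case: walk_weight => // r2; by rewrite addnA.
Qed.


Lemma walkU N M (a b : 'I_M -> 'I_N -> nat) c (HN : 0 < N) n m : m + n < N ->
  walk_weight a b c (uV M (ordN HN m)) [seq uV M (ordN HN x) | x <- iota m.+1 n] = Some 0.
Proof.
elim: n m => [|n IH] m h //=.
rewrite IH; last lia.
rewrite /edge /= !val_ordN; try lia.
by rewrite eqxx; case: eqP.
Qed.

Lemma walkW N M (a b : 'I_M -> 'I_N -> nat) c (HN : 0 < N) n m : m + n < N ->
  walk_weight a b c (wV M (ordN HN m)) [seq wV M (ordN HN x) | x <- iota m.+1 n] = Some 0.
Proof.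
elim: n m => [|n IH] m h //=.
rewrite IH; last lia.
rewrite /edge /= !val_ordN; try lia.
by rewrite eqxx; case: eqP.
Qed.

Lemma walkV N M (a b : 'I_M -> 'I_N -> nat) c (HN : 0 < N) n : n < N ->
  walk_weight a b c (vV M (ordN HN n)) [seq vV M (ordN HN x) | x <- down n] = Some 0.
Proof.
elim: n => [|n IH] h //=.
rewrite IH; last lia.
rewrite /edge /= !val_ordN; try lia.
by rewrite eqxx.
Qed.

Lemma last_iota m n : last m (iota m.+1 n) = m + n.
Proof. elim: n m => [|n IH] m /=; [lia| rewrite IH; lia]. Qed.
Lemma last_down n : last n (down n) = 0.
Proof. by elim: n => //= n. Qed.

Definition mkp N M (HN : 0 < N) (i j k : nat) (l : 'I_M) : seq (vtx N M) :=
  [seq uV M (ordN HN x) | x <- iota 1 i] ++ xV N l ::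
  ([seq vV M (ordN HN x) | x <- j :: down j] ++ [seq wV M (ordN HN x) | x <- iota k (N - k)]).

Lemma inj_ordN N (HN : 0 < N) x y : x < N -> y < N -> ordN HN x = ordN HN y -> x = y.
Proof. by move=> hx hy /(congr1 val) /=; rewrite !val_ordN. Qed.

Lemma nohas (T : eqType) (f g : nat -> T) (s t : seq nat) : (forall x y, f x <> g y) ->
  ~~ has (in_mem^~ (mem (map f s))) (map g t).
Proof.
move=> H; apply/hasPn => z /mapP [y _ ->]; apply/negP => /mapP [x _] E.
exact: (H x y (esym E)).
Qed.

Lemma hop N M (a b : 'I_M -> 'I_N -> nat) c (HN : 0 < N) (t : 'I_N) (Ht : t = N.-1 :> nat)
  (i j k : 'I_N) (l : 'I_M) : i + j <= k ->
  hop_path a b c (uV M (Ordinal HN)) (wV M t) N.+2 (mkp HN i j k l)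
    ((5 * Wmax a b c - a l i) + (5 * Wmax a b c - b l j) + (5 * Wmax a b c + c k)).
Proof.
move=> hijk.
have hi := ltn_ord i; have hj := ltn_ord j; have hk := ltn_ord k.
have E0 : uV M (Ordinal HN) = uV M (ordN HN 0).
  by congr uV; apply: val_inj; rewrite /= val_ordN.
have Nk : N - k = (N - k - 1).+1 by lia.
rewrite E0 /mkp; split.
- rewrite -cat_cons (_ : uV M (ordN HN 0) :: _ = [seq uV M (ordN HN x) | x <- iota 0 i.+1]) //.
  rewrite (@cat_uniq (vtx N M)); apply/and3P; split.
  + rewrite map_inj_in_uniq ?iota_uniq // => x y; rewrite !mem_iota => hx hy [].
    apply: inj_ordN; lia.
  + apply/hasPn => z; rewrite in_cons mem_cat => /orP [/eqP ->|/orP [] /mapP [y _ ->]];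
      by apply/negP => /mapP [? _].
  + rewrite cons_uniq (@cat_uniq (vtx N M)); apply/andP; split; last (apply/and3P; split).
    * by apply/negP; rewrite mem_cat => /orP [] /mapP [? _].
    * rewrite map_inj_in_uniq /=; first by rewrite mem_down ltnn uniq_down.
      move=> x y; rewrite !in_cons !mem_down => hx hy [] /inj_ordN; apply; [move: hx|move: hy]; case/orP => [/eqP ->|]; lia.
    * by apply: nohas => ? ? E; discriminate E.
    * rewrite map_inj_in_uniq ?iota_uniq // => x y; rewrite !mem_iota => hx hy [].
      apply: inj_ordN; lia.
- rewrite last_cat /= last_cat Nk /= (last_map (fun x => wV M (ordN HN x))) last_iota.
  congr wV; apply: val_inj; rewrite /= val_ordN; lia.
- rewrite size_cat /= size_cat !size_map !size_iota size_down; lia.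
- rewrite walk_cat walkU; last lia.
  rewrite (last_map (fun x => uV M (ordN HN x))) last_iota add0n /=.
  rewrite walk_cat walkV // (last_map (fun x => vV M (ordN HN x))) last_down Nk /= walkW; last lia.
  rewrite /edge /= val_ordN // !ordN_ord; congr Some; lia.
Qed.

Theorem mainTheorem8 (N M : nat) (HN : 1 <= N) (HM : 1 <= M)
    (a b : 'I_M -> 'I_N -> nat) (c : 'I_N -> nat) :
  let u0 := uV M (Ordinal HN) in
  let wlast := @wV N M (Ordinal (eq_rect _ is_true HN _ (esym (ltn_predL N)))) in
  exists d, is_min_hop_dist a b c u0 wlast N.+2 d /\
    (d < 15 * Wmax a b c <->
     exists (i j k : 'I_N) (l : 'I_M), i + j <= k /\ c k < a l i + b l j).
Proof.
move=> u0 wlast.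
have [Ha [Hb Hc]] := Wbounds a b c.
set W := Wmax a b c in Ha Hb Hc *.
have Ht : wlast = wV M (Ordinal (eq_rect _ is_true HN _ (esym (ltn_predL N)))) by [].
have Hp := @hop N M a b c HN (Ordinal (eq_rect _ is_true HN _ (esym (ltn_predL N)))) erefl.
have [d [[p Pd] Hmin]] : exists d, (exists p, hop_path a b c u0 wlast N.+2 p d) /\
    forall d', (exists p, hop_path a b c u0 wlast N.+2 p d') -> d <= d'.
  apply: min_exists; eexists; exact: (Hp (Ordinal HN) (Ordinal HN) (Ordinal HN) (Ordinal HM)).
exists d; split; first by split; [exists p|move=> q d' H; apply: Hmin; exists q].
split.
- move=> Hd; case: Pd => _ Hl Hs Hw.
  have := walkQ (t := Ordinal (eq_rect _ is_true HN _ (esym (ltn_predL N)))) erefl Hl Hw.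
  rewrite /Q /= -/W => -[[i [j [k [l [H1 H2]]]]]|H]; last lia.
  exists i, j, k, l; move: (Ha l i) (Hb l j) Hs H1 => ? ?; set s := size p => Hs H1; split; lia.
- move=> [i [j [k [l [H1 H2]]]]].
  have := Hmin _ (ex_intro _ (mkp HN i j k l) (Hp i j k l H1)).
  rewrite -/W; have := Ha l i; have := Hb l j; lia.
Qed.
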